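(* In Setting S, let $E$ be as there. If $H^0(X,\widetilde E(p,q))\ne0$ for $(p,q)\in\mathbb Z^2$, then \[ q\ge j^0_1+\dots+j^r_1\quad\text{and}\quad p+a_rq\ge i^0_1+\dots+i^s_1+a_rj^0_1+(a_r-a_1)j^1_1+\dots+(a_r-a_{r-1})j^{r-1}_1 . \] That is, $\mathrm{supp}(\Gamma E)$ is contained in the set $L_E$ of such $(p,q)$.
   Context: Setting S. Fix integers $s,r\ge1$ and $0\le a_1\le\dots\le a_r$. $X=\mathbb P(\mathcal O_{\mathbb P^s}\oplus\mathcal O_{\mathbb P^s}(a_1)\oplus\dots\oplus\mathcal O_{\mathbb P^s}(a_r))$ is the smooth complete toric variety of dimension $s+r$ with $N=\mathbb Z^{s+r}$ (basis $e_1,\dots,e_s,f_1,\dots,f_r$), character lattice $M=\mathbb Z^{s+r}$, and rays $\rho_0=\mathrm{cone}(-e_1-\dots-e_s+a_1f_1+\dots+a_rf_r)$, $\rho_i=\mathrm{cone}(e_i)$ $(1\le i\le s)$, $\eta_0=\mathrm{cone}(-f_1-\dots-f_r)$, $\eta_j=\mathrm{cone}(f_j)$ $(1\le j\le r)$; the maximal cones are spanned by all rays but one $\rho_i$ and one $\eta_j$. For $m=(d_1,\dots,d_{s+r})\in M$: $\langle m,n(\rho_0)\rangle=-d_1-\dots-d_s+a_1d_{s+1}+\dots+a_rd_{s+r}$, $\langle m,n(\rho_i)\rangle=d_i$, $\langle m,n(\eta_0)\rangle=-(d_{s+1}+\dots+d_{s+r})$, $\langle m,n(\eta_j)\rangle=d_{s+j}$.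 The Cox ring is $R=\mathbb C[x_0,\dots,x_s,y_0,\dots,y_r]$, $\mathbb Z^{s+r+2}$-graded (finest grading) and $\mathrm{Cl}(X)\cong\mathbb Z^2$-graded by $\deg x_i=(1,0)$, $\deg y_0=(0,1)$, $\deg y_j=(-a_j,1)$; $(p,q)$ corresponds to $p[D_{\rho_0}]+q[D_{\eta_0}]$. $E$ is a finitely generated $\mathbb Z^{s+r+2}$-graded reflexive $R$-module of rank $\ell$, $\widetilde E$ its (equivariant) sheaf on $X$, $\widetilde E(p,q)$ the sheaf of the shift $E(p,q)$ ($E(p,q)_\alpha=E_{\alpha+(p,q)}$), $\Gamma E=\bigoplus_{(p,q)}H^0(X,\widetilde E(p,q))$, $\mathrm{supp}(\Gamma E)=\{(p,q):H^0(X,\widetilde E(p,q))\neq0\}$, $h_{\Gamma E}(p,q)=\dim H^0(X,\widetilde E(p,q))$. Klyachko filtrations: for a ray $\tau$ let $x^{\hat\tau}$ be the product of the variables of all rays other than $\tau$; the pieces of $E_{x^{\hat\tau}}$ of degree $\phi(m)=(\langle m,n(\tau')\rangle)_{\tau'}$ embed compatibly into a fixed $\mathbf E\cong\mathbb C^\ell$, and the image depends only on $i=\langle m,n(\tau)\rangle$; it is denoted $E^\tau(i)$, an increasing filtration of $\mathbb C^\ell$. For $\tau=\rho_t$ ($0\le t\le s$) write integers $i^t_1\le\dots\le i^t_\ell$ and subspaces $0\ne F^t_1\subseteq\dots\subseteq F^t_\ell=\mathbb C^\ell$ with $E^{\rho_t}(i)=0$ for $i<i^t_1$, $=F^t_n$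 for $i^t_n\le i<i^t_{n+1}$, $=\mathbb C^\ell$ for $i\ge i^t_\ell$, and $i^t_n=i^t_{n+1}$ iff $F^t_n=F^t_{n+1}$; similarly for $\tau=\eta_u$ ($0\le u\le r$) with integers $j^u_n$ and subspaces $G^u_n$. Set $i^t_{\ell+1}=j^u_{\ell+1}=+\infty$. Known fact (Klyachko): $H^0(X,\widetilde E(p,q))=\bigoplus_{m\in M}H^0(X,\widetilde E(p,q))_m$ (torus weights) with $H^0(X,\widetilde E(p,q))_m\cong E^{\rho_0}(\langle m,n(\rho_0)\rangle+p)\cap\bigcap_{i=1}^sE^{\rho_i}(\langle m,n(\rho_i)\rangle)\cap E^{\eta_0}(\langle m,n(\eta_0)\rangle+q)\cap\bigcap_{j=1}^rE^{\eta_j}(\langle m,n(\eta_j)\rangle)$. *)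

(* Defs.v *)
From HB Require Import structures.
From mathcomp Require Import all_boot all_order all_algebra.
From mathcomp Require Import complex reals.
Set Implicit Arguments. Unset Strict Implicit. Unset Printing Implicit Defensive.
Import Order.TTheory GRing.Theory Num.Theory.
Local Open Scope ring_scope.

Notation CC R := (complex.complex (Num.RealClosedField.clone R _)) (only parsing).

(* A Klyachko filtration of C^ell: an increasing Z-indexed family of subspaces
   (row spaces of ell x ell matrices), equal to 0 for i << 0 and to C^ell
   for i >> 0. *)
Definition klyachko_filtration (K : fieldType) (ell : nat) (E : int -> 'M[K]_ell) : Prop :=
  [/\ forall i : int, (E i <= E (i + 1)%R)%MS,
      exists i0 : int, forall i : int, i <= i0 -> E i == 0
    & exists i1 : int, forall i : int, i1 <= i -> (1%:M <= E i)%MS].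

Definition first_jump (K : fieldType) (ell : nat) (E : int -> 'M[K]_ell) (i : int) : Prop :=
  E i != 0 /\ E (i - 1) == 0.

(* Rays: rho_t (t = 0..s) with filtrations Erho t, eta_u (u = 0..r)
   with filtrations Eeta u.  Characters m = (d_1..d_s, d_{s+1}..d_{s+r}) are
   encoded as d : nat -> int (used on 1..s) and e : nat -> int (e j = d_{s+j},
   used on 1..r).  The weight-m piece of H^0(X, E~(p,q)) via Klyachko's formula: *)
Definition H0_weight (K : fieldType) (ell s r : nat) (a : nat -> nat)
    (Erho Eeta : nat -> int -> 'M[K]_ell) (p q : int) (d e : nat -> int) : 'M[K]_ell :=
  let m_rho0 := - (\sum_(1 <= i < s.+1) d i) + \sum_(1 <= j < r.+1) (a j)%:Z * e j in
  let m_eta0 := - (\sum_(1 <= j < r.+1) e j) in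
  (Erho 0%N (m_rho0 + p)%R
   :&: (\bigcap_(1 <= i < s.+1) Erho i (d i))
   :&: Eeta 0%N (m_eta0 + q)%R
   :&: (\bigcap_(1 <= j < r.+1) Eeta j (e j)))%MS.

(* H^0(X, E~(p,q)) = (+)_m H^0(X,E~(p,q))_m, so it is nonzero iff some
   weight piece is nonzero; (p,q) \in supp(Gamma E) iff this holds. *)
Definition in_supp_GammaE (K : fieldType) (ell s r : nat) (a : nat -> nat)
    (Erho Eeta : nat -> int -> 'M[K]_ell) (p q : int) : Prop :=
  exists d e : nat -> int, H0_weight s r a Erho Eeta p q d e != 0.

(* Main.v *)
Require Import Defs.
From HB Require Import structures.
From mathcomp Require Import all_boot all_order all_algebra.
From mathcomp Require Import complex reals.
From mathcomp Require Import zify ring lra.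
Import Order.TTheory GRing.Theory Num.Theory.
Local Open Scope ring_scope.

Lemma bigcap_seq_le {K : fieldType} {n} (A : nat -> 'M[K]_n) (r : seq nat) i0 :
  i0 \in r -> (\bigcap_(i <- r) A i <= A i0)%MS.
Proof.
elim: r => [|x r IH] //=; rewrite inE big_cons => /orP [/eqP <-|Hi].
  exact: capmxSl.
exact: submx_trans (capmxSr _ _) (IH Hi).
Qed.

Lemma bigcap_nat_nz {K : fieldType} {n} {A : nat -> 'M[K]_n} {m k} i0 :
  (m <= i0 < k)%N -> (\bigcap_(m <= i < k) A i)%MS != 0 -> A i0 != 0.
Proof.
move=> Hi; apply: contra => /eqP A0.
rewrite -submx0 -A0; apply: bigcap_seq_le; by rewrite mem_index_iota.
Qed.

Lemma cap_nz {K : fieldType} {n} {A B : 'M[K]_n} :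
  (A :&: B)%MS != 0 -> A != 0 /\ B != 0.
Proof.
move=> H; split; move: H; apply: contra => /eqP A0; rewrite -submx0 -A0.
  exact: capmxSl.
exact: capmxSr.
Qed.

Lemma jump_le {K : fieldType} {n} {E : int -> 'M[K]_n} {j k : int} :
  (forall i, (E i <= E (i + 1)%R)%MS) -> E (j - 1) == 0 -> E k != 0 -> j <= k.
Proof.
move=> Hm Hj Hk; rewrite leNgt; apply/negP => hkj.
have Hn : forall m : nat, (E k <= E (k + m%:Z)%R)%MS.
  elim=> [|m IH]; first by rewrite addr0.
  apply: submx_trans IH _.
  have -> : k + m.+1%:Z = (k + m%:Z) + 1 by rewrite -addn1 PoszD addrA.
  exact: Hm.
have Heq : k + ((absz (j - 1 - k)%R))%:Z = j - 1.
  rewrite gez0_abs; [ring | lia].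
move: (Hn (absz (j - 1 - k)%R)); rewrite Heq => H1.
by move: Hk; rewrite -submx0 (submx_trans H1) // submx0.
Qed.

Lemma arith1 (j0 Sj Se q : int) : j0 <= - Se + q -> Sj <= Se -> j0 + Sj <= q.
Proof. lia. Qed.

Lemma arith2 (i0 Sd Sae p Si Z X Y Sw : int) :
  i0 <= - Sd + Sae + p -> Si <= Sd -> Z <= - X + Y -> Sw <= X - Sae ->
  i0 + Si + Z + Sw <= p + Y.
Proof. lia. Qed.

Theorem mainTheorem6 (R : realType) (s r ell : nat) (a : nat -> nat)
    (Erho Eeta : nat -> int -> 'M[CC R]_ell)
    (irho jeta : nat -> int) (p q : int) :
  (1 <= s)%N -> (1 <= r)%N -> (1 <= ell)%N ->
  (forall j : nat, (1 <= j)%N -> (j < r)%N -> (a j <= a j.+1)%N) ->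
  (forall t : nat, (t <= s)%N -> klyachko_filtration (Erho t)) ->
  (forall u : nat, (u <= r)%N -> klyachko_filtration (Eeta u)) ->
  (forall t : nat, (t <= s)%N -> first_jump (Erho t) (irho t)) ->
  (forall u : nat, (u <= r)%N -> first_jump (Eeta u) (jeta u)) ->
  in_supp_GammaE s r a Erho Eeta p q ->
  q >= \sum_(0 <= u < r.+1) jeta u /\
  p + (a r)%:Z * q >= \sum_(0 <= t < s.+1) irho t + (a r)%:Z * jeta 0%N
                       + \sum_(1 <= j < r) ((a r)%:Z - (a j)%:Z) * jeta j.
Proof.
move=> hs hr hl ha HKr HKe HJr HJe [d [e Hnz]].
rewrite /H0_weight in Hnz.
have [H123 HD] := cap_nz Hnz.
have [H12 HC] := cap_nz H123.
have [HA HB] := cap_nz H12.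
have LR : forall t k, (t <= s)%N -> Erho t k != 0 -> irho t <= k.
  move=> t k Ht Hk; case: (HKr t Ht) => Hm _ _; case: (HJr t Ht) => _ Hj.
  exact: jump_le Hm Hj Hk.
have LE : forall u k, (u <= r)%N -> Eeta u k != 0 -> jeta u <= k.
  move=> u k Hu Hk; case: (HKe u Hu) => Hm _ _; case: (HJe u Hu) => _ Hj.
  exact: jump_le Hm Hj Hk.
have H0 := LR 0%N _ (leq0n s) HA.
have He0 := LE 0%N _ (leq0n r) HC.
have Hd : forall i, (1 <= i < s.+1)%N -> irho i <= d i.
  move=> i Hi; apply: LR; first by lia.
  exact: bigcap_nat_nz Hi HB.
have He : forall j, (1 <= j < r.+1)%N -> jeta j <= e j.
  move=> j Hj; apply: LE; first by lia.
  exact: bigcap_nat_nz Hj HD.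
have amono : forall j, (1 <= j)%N -> (j <= r)%N -> (a j <= a r)%N.
  move=> j Hj Hjr.
  have : forall k, (j + k <= r)%N -> (a j <= a (j + k))%N.
    elim=> [|k IH] Hk; first by rewrite addn0.
    apply: leq_trans (IH ltac:(lia)) _; rewrite addnS; apply: ha; lia.
  by move/(_ (r - j)%N); rewrite subnKC //; apply.
have Sir : \sum_(1 <= i < s.+1) irho i <= \sum_(1 <= i < s.+1) d i.
  exact: ler_sum_nat.
have Sje : \sum_(1 <= j < r.+1) jeta j <= \sum_(1 <= j < r.+1) e j.
  exact: ler_sum_nat.
have Sw : \sum_(1 <= j < r) ((a r)%:Z - (a j)%:Z) * jeta j
          <= \sum_(1 <= j < r) ((a r)%:Z - (a j)%:Z) * e j.
  apply: ler_sum_nat => j Hj; apply: ler_wpM2l.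
    rewrite subr_ge0 lez_nat; apply: amono; lia.
  apply: He; lia.
have Ew : \sum_(1 <= j < r) ((a r)%:Z - (a j)%:Z) * e j
          = (a r)%:Z * \sum_(1 <= j < r.+1) e j - \sum_(1 <= j < r.+1) (a j)%:Z * e j.
  rewrite mulr_sumr -sumrB big_nat_recr //= subrr addr0.
  by apply: eq_bigr => j _; rewrite mulrBl.
rewrite (@big_ltn _ _ _ 0%N r.+1) // (@big_ltn _ _ _ 0%N s.+1) //.
split; first exact: arith1 He0 Sje.
have HZ : (a r)%:Z * (jeta 0%N) <= (a r)%:Z * (- (\sum_(1 <= j < r.+1) e j) + q).
  by apply: ler_wpM2l.
rewrite mulrDr mulrN in HZ.
rewrite Ew in Sw.
exact: arith2 H0 Sir HZ Sw.
Qed.
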